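(* Let $\mathcal A$ be a Banach algebra such that $\mathcal A^{**}$, with the first Arens product, is super weakly amenable. Then (i) the linear span of $\{ab:a,b\in\mathcal A\}$ is dense in $\mathcal A$; and (ii) there are no nonzero continuous point derivations on $\mathcal A$: for every nonzero continuous multiplicative linear functional $\varphi$ on $\mathcal A$, every continuous linear functional $d$ on $\mathcal A$ with $d(ab)=d(a)\varphi(b)+\varphi(a)d(b)$ for all $a,b$ is zero.
   Context: For a continuous homomorphism $\varphi:\mathcal A\to\mathcal B$, $\mathcal B_\varphi$ is $\mathcal B$ as an $\mathcal A$-bimodule with $a\cdot b=\varphi(a)b$, $b\cdot a=b\varphi(a)$, and $\mathcal B_\varphi^*$ is its dual bimodule ($\langle x,a\cdot f\rangle=\langle x\cdot a,f\rangle$, $\langle x,f\cdot a\rangle=\langle a\cdot x,f\rangle$). A derivation $d:\mathcal A\to X$ is a bounded linear map with $d(ab)=d(a)\cdot b+a\cdot d(b)$. A Banach algebra $\mathcal A$ is super weakly amenable if for every Banach algebra $\mathcal B$, every continuous homomorphism $\varphi:\mathcal A\to\mathcal B$ and every derivation $d:\mathcal A\to\mathcal B_\varphi^*$, $\langle d(a),\varphi(b)\rangle+\langle d(b),\varphi(a)\rangle=0$ for all $a,b\in\mathcal A$. *)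

(* Defs.v *)
From mathcomp Require Import all_boot all_algebra.
From mathcomp Require Import all_classical all_reals all_analysis.
From mathcomp Require Export complex.
Set Implicit Arguments. Unset Strict Implicit. Unset Printing Implicit Defensive.
Import GRing.Theory Num.Theory.
Local Open Scope ring_scope.
Local Open Scope classical_set_scope.

Section Defs.
Variable R : realType.
Local Notation K := R[i].

Definition banach_mul (B : normedModType K) (m : B -> B -> B) : Prop :=
  [/\ (forall (c : K) x y z, m (c *: x + y) z = c *: m x z + m y z),
      (forall (c : K) x y z, m z (c *: x + y) = c *: m z x + m z y),
      (forall x y z, m (m x y) z = m x (m y z)) &
      (forall x y, `|m x y| <= `|x| * `|y|)].

Definition linear_fun (V : lmodType K) (f : V -> K) : Prop :=
  forall (c : K) x y, f (c *: x + y) = c * f x + f y.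

(* Super weak amenability of a normed algebra presented as the subspace
   [S] of a K-module [V], with multiplication [mV] and norm given through
   the relation [nb x M] := "||x|| <= M".  A bounded derivation
   d : V -> B_phi^* is recorded as the bilinear form (x, b) |-> <d(x), b>:
   <x', d(a).b> = <b.x', d(a)> = d a (phi b * x'),
   <x', a.d(b)> = <x'.a, d(b)> = d b (x' * phi a). *)
Definition super_weakly_amenable (V : lmodType K) (S : set V)
    (nb : V -> K -> Prop) (mV : V -> V -> V) : Prop :=
  forall (B : completeNormedModType K) (mB : B -> B -> B), banach_mul mB ->
  forall phi : V -> B,
    (forall (c : K) x y, S x -> S y -> phi (c *: x + y) = c *: phi x + phi y) ->
    (forall x y, S x -> S y -> phi (mV x y) = mB (phi x) (phi y)) ->
    (exists C : K, forall x M, S x -> nb x M -> `|phi x| <= C * M) ->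
  forall d : V -> B -> K,
    (forall (c : K) x y b, S x -> S y -> d (c *: x + y) b = c * d x b + d y b) ->
    (forall x (c : K) b b', S x -> d x (c *: b + b') = c * d x b + d x b') ->
    (exists C : K, forall x M b, S x -> nb x M -> `|d x b| <= C * M * `|b|) ->
    (forall x y b, S x -> S y ->
        d (mV x y) b = d x (mB (phi y) b) + d y (mB b (phi x))) ->
  forall x y, S x -> S y -> d x (phi y) + d y (phi x) = 0.

Definition swa_banach (A : normedModType K) (mA : A -> A -> A) : Prop :=
  @super_weakly_amenable A setT (fun x M => `|x| <= M) mA.

Section Bidual.
Variables (A : normedModType K) (mA : A -> A -> A).

Definition dual_bound (f : A -> K) (N : K) : Prop :=
  forall a, `|f a| <= N * `|a|.

Definition in_dual : set (A -> K) :=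
  [set f | linear_fun f /\ exists N, dual_bound f N].

(* "||F|| <= M" for F on A^* (operator norm = least bound) *)
Definition bidual_bound (F : (A -> K) -> K) (M : K) : Prop :=
  forall f N, in_dual f -> 0 <= N -> dual_bound f N -> `|F f| <= M * N.

(* the bidual A^** : bounded linear functionals on A^*, represented as
   functions on A -> K vanishing outside A^* *)
Definition in_bidual : set ((A -> K) -> K) :=
  [set F | [/\ (forall (c : K) f g, in_dual f -> in_dual g ->
                  F (c *: f + g) = c * F f + F g),
              (exists M, bidual_bound F M) &
              (forall f, ~ in_dual f -> F f = 0)]].

(* first Arens product:  <f.a, b> = <f, ab>,  <G.f, a> = <G, f.a>,
   <F [] G, f> = <F, G.f>. *)
Definition arens1 (F G : (A -> K) -> K) : (A -> K) -> K :=
  fun f => if `[< in_dual f >] then F (fun a => G (fun b => f (mA a b))) else 0.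

Definition span_products : set A :=
  [set x | exists n (c : 'I_n -> K) (a b : 'I_n -> A),
             x = \sum_(i < n) c i *: mA (a i) (b i)].

End Bidual.

Definition bidual_swa (A : normedModType K) (mA : A -> A -> A) : Prop :=
  @super_weakly_amenable _ (@in_bidual A) (@bidual_bound A) (arens1 mA).

End Defs.

(* Main.v *)
Require Import Defs.
From mathcomp Require Import all_boot all_algebra.
From mathcomp Require Import all_classical all_reals all_analysis.
From mathcomp Require Import complex.
From mathcomp Require Import order ring lra.
Import Order.TTheory GRing.Theory Num.Theory.
Import numFieldNormedType.Exports.
Local Open Scope ring_scope.
Local Open Scope classical_set_scope.
Set Implicit Arguments. Unset Strict Implicit. Unset Printing Implicit Defensive.

Lemma lin0 (R : realType) (V : lmodType R[i]) (f : V -> R[i]) :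
  linear_fun f -> f 0 = 0.
Proof.
move=> lf; have := lf 1 0 0; rewrite scale1r addr0 mul1r => H.
by have := congr1 (fun z => z - f 0) H; rewrite addrK subrr.
Qed.

Lemma linZ (R : realType) (V : lmodType R[i]) (f : V -> R[i]) c x :
  linear_fun f -> f (c *: x) = c * f x.
Proof. by move=> lf; have := lf c x 0; rewrite addr0 lin0 // addr0. Qed.

Lemma linD (R : realType) (V : lmodType R[i]) (f : V -> R[i]) x y :
  linear_fun f -> f (x + y) = f x + f y.
Proof. by move=> lf; have := lf 1 x y; rewrite scale1r mul1r. Qed.

Lemma cont_bound (R : realType) (V : normedModType R[i]) (f : V -> R[i]^o) :
  linear_fun f -> continuous f ->
  exists N : R[i], 0 <= N /\ forall a, `|f a| <= N * `|a|.
Proof.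
move=> lf cf.
have f0 : f 0 = 0 := lin0 lf.
have := cf 0; rewrite /continuous_at f0 => /cvgr0_norm_lt /(_ 1 ltr01) /nbhs_norm0P [e /= e0 He].
exists (2 / e); split; first by rewrite divr_ge0 // ltW.
move=> a; have [->|a0] := eqVneq a 0; first by rewrite f0 !normr0 mulr0.
have na0 : 0 < `|a| by rewrite normr_gt0.
have k0 : 0 < e / (2 * `|a|) by rewrite divr_gt0 // mulr_gt0.
set k := e / (2 * `|a|).
have Hk : `|k *: a| < e.
  rewrite normrZ gtr0_norm //.
  have -> : k * `|a| = e / 2 by rewrite /k; field; rewrite gt_eqF.
  by rewrite ltr_pdivrMr ?ltr0n // ltr_pMr // ltr1n.
have := He _ Hk; rewrite /= (linZ _ _ lf) normrM gtr0_norm // => H.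
have : `|f a| < k^-1 by rewrite -(ltr_pM2l k0) mulfV ?gt_eqF.
rewrite /k invf_div => /ltW /le_trans; apply.
by rewrite mulrAC.
Qed.

Local Open Scope complex_scope.

Section RealHB.
Variables (R : realType) (V : lmodType R[i]) (p : V -> R).
Hypothesis p_ge0 : forall a, 0 <= p a.
Hypothesis p_add : forall a b, p (a + b) <= p a + p b.
Hypothesis p_scale : forall (t : R) a, 0 <= t -> p (t%:C *: a) = t * p a.
Variable x : V.

Lemma p0 : p 0 = 0.
Proof. by rewrite -(scale0r 0) -[0%R]/(0%:C) p_scale // mul0r. Qed.

Definition good (G : set (V * R)) :=
  [/\ forall u r s, G (u, r) -> G (u, s) -> r = s,
      forall u v r s t, G (u, r) -> G (v, s) -> G (t%:C *: u + v, t * r + s) &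
      forall u r, G (u, r) -> r <= p u].

Definition G0 : set (V * R) := [set z | exists t : R, z = (t%:C *: x, t * p x)].

Lemma good_G0 : good G0.
Proof.
split.
- move=> u r s [t [-> ->]] [t' [e ->]].
  have [x0|x0] := eqVneq x 0; first by rewrite x0 p0 !mulr0.
  have : (t - t')%:C *: x = 0 by rewrite rmorphB scalerBl e subrr.
  move/eqP; rewrite scaler_eq0 (negbTE x0) orbF => /eqP /complexI /eqP.
  by rewrite subr_eq0 => /eqP ->.
- move=> u v r s t [t1 [-> ->]] [t2 [-> ->]]; exists (t * t1 + t2).
  by rewrite scalerA -scalerDl rmorphD rmorphM mulrA mulrDl.
- move=> u r [t [-> ->]]; have [t0|t0] := leP 0 t; first by rewrite p_scale.
  have := p_ge0 (t%:C *: x); have := p_ge0 x; nra.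
Qed.

Lemma good_pair (F : set (set (V * R))) :
  F `<=` (fun G => good (G `|` G0)) -> total_on F subset ->
  forall z1 z2, (\bigcup_(G in F) G `|` G0) z1 -> (\bigcup_(G in F) G `|` G0) z2 ->
  exists H, [/\ good H, H z1, H z2 & H `<=` \bigcup_(G in F) G `|` G0].
Proof.
move=> FP tot z1 z2 h1 h2.
have subG (G : set (V * R)) : F G -> G `|` G0 `<=` \bigcup_(G in F) G `|` G0.
  by move=> FG z [Gz|G0z]; [left; exists G|right].
case: h1 => [[G1 FG1 G1z]|G0z1]; case: h2 => [[G2 FG2 G2z]|G0z2].
- have [s12|s21] := tot _ _ FG1 FG2.
  + exists (G2 `|` G0); split; [exact: FP|left; exact: s12|by left|exact: subG].
  + exists (G1 `|` G0); split; [exact: FP|by left|left; exact: s21|exact: subG].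
- exists (G1 `|` G0); split; [exact: FP|by left|by right|exact: subG].
- exists (G2 `|` G0); split; [exact: FP|by right|by left|exact: subG].
- exists G0; split; [exact: good_G0|done|done|by move=> z; right].
Qed.

Lemma good_chain (F : set (set (V * R))) :
  F `<=` (fun G => good (G `|` G0)) -> total_on F subset ->
  good (\bigcup_(G in F) G `|` G0).
Proof.
move=> FP tot; have hp := good_pair FP tot; split.
- move=> u r s h1 h2; have [H [[gf _ _] H1 H2 _]] := hp _ _ h1 h2; exact: gf H1 H2.
- move=> u v r s t h1 h2; have [H [[_ gc _] H1 H2 HU]] := hp _ _ h1 h2.
  exact/HU/gc.
- move=> u r h1; have [H [[_ _ gd] H1 _ _]] := hp _ _ h1 h1; exact: gd H1.
Qed.


Lemma good_ext (H : set (V * R)) y : good H -> G0 `<=` H -> ~ (exists r, H (y, r)) ->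
  exists c, good [set z | exists u r t, H (u, r) /\ z = (u + t%:C *: y, r + t * c)].
Proof.
move=> [gf gc gd] HG0 hny.
have H00 : H (0, 0).
  have := HG0 ((0:R)%:C *: x, 0 * p x) (ex_intro _ 0 erefl).
  by rewrite rmorph0 scale0r mul0r.
have hscale u r t : H (u, r) -> H (t%:C *: u, t * r).
  by move=> Hu; have := gc _ _ _ _ t Hu H00; rewrite !addr0.
have hadd u r v s : H (u, r) -> H (v, s) -> H (u + v, r + s).
  by move=> Hu Hv; have := gc _ _ _ _ 1 Hu Hv; rewrite rmorph1 scale1r mul1r.
have key u r v s : H (u, r) -> H (v, s) -> r - p (u - y) <= p (v + y) - s.
  move=> Hu Hv; have h1 := gd _ _ (hadd _ _ _ _ Hu Hv).
  have h2 : p (u + v) <= p (u - y) + p (v + y).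
    have -> : u + v = (u - y) + (v + y) by rewrite addrACA addNr addr0.
    exact: p_add.
  lra.
pose E := [set z | exists u r, H (u, r) /\ z = r - p (u - y)].
have hE0 : E !=set0 by exists (0 - p (0 - y)), 0, 0.
have hub : ubound E (p (0 + y) - 0).
  by move=> z [u [r [Hu ->]]]; exact: key Hu H00.
pose c := sup E.
have c_ge u r : H (u, r) -> r - p (u - y) <= c.
  move=> Hu; apply: (ub_le_sup (ex_intro _ _ hub)); by exists u, r.
have c_le v s : H (v, s) -> c <= p (v + y) - s.
  move=> Hv; apply: ge_sup hE0 _ => z [u [r [Hu ->]]]; exact: key Hu Hv.
exists c; split.
- move=> w a b [u1 [r1 [t1 [H1 [e1 ->]]]]] [u2 [r2 [t2 [H2 [e2 ->]]]]].
  have e : u1 + t1%:C *: y = u2 + t2%:C *: y by rewrite -e1 -e2.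
  have [t12|t12] := eqVneq t1 t2.
    subst t2; move/addIr: e => e; subst u2; by rewrite (gf _ _ _ H1 H2).
  exfalso; apply: hny.
  have e' : u1 - u2 = (t2 - t1)%:C *: y.
    have := congr1 (fun w => w - u2 - t1%:C *: y) e.
    rewrite /= addrAC addrK [u2 + _]addrC addrK => ->.
    by rewrite rmorphB scalerBl.
  have Hd := hadd _ _ _ _ H1 (hscale _ _ (-1) H2).
  have := hscale _ _ ((t2 - t1)^-1) Hd.
  rewrite rmorphN rmorph1 scaleN1r e' scalerA -rmorphM mulVf ?subr_eq0 1?eq_sym //.
  rewrite rmorph1 scale1r => Hy; by eexists; exact: Hy.
- move=> w1 w2 a b t [u1 [r1 [t1 [H1 [-> ->]]]]] [u2 [r2 [t2 [H2 [-> ->]]]]].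
  exists (t%:C *: u1 + u2), (t * r1 + r2), (t * t1 + t2); split; first exact: gc.
  congr pair; last by ring.
  by rewrite scalerDr addrACA rmorphD scalerDl rmorphM -scalerA.
- move=> w a [u [r [t [Hu [-> ->]]]]].
  have [t0|t0|->] := ltgtP t 0; last first.
  + by rewrite rmorph0 scale0r addr0 mul0r addr0; exact: gd Hu.
  + have := c_le _ _ (hscale _ _ t^-1 Hu).
    have -> : u + t%:C *: y = t%:C *: (t^-1%:C *: u + y).
      by rewrite scalerDr scalerA -rmorphM mulfV ?gt_eqF // rmorph1 scale1r.
    rewrite p_scale; last exact: ltW.
    move=> hc; have := ler_wpM2l (ltW t0) hc.
    rewrite mulrBr mulrA mulfV ?gt_eqF // mul1r; lra.
  + have tp : 0 < - t by rewrite oppr_gt0.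
    have := c_ge _ _ (hscale _ _ (- t)^-1 Hu).
    have -> : u + t%:C *: y = (- t)%:C *: ((- t)^-1%:C *: u - y).
      rewrite scalerBr scalerA -rmorphM mulfV ?gt_eqF // rmorph1 scale1r.
      by rewrite rmorphN scaleNr opprK.
    rewrite p_scale; last exact: ltW.
    move=> hc; have := ler_wpM2l (ltW tp) hc.
    rewrite mulrBr mulrA mulfV ?gt_eqF // mul1r; lra.
Qed.


Theorem real_HB : exists g : V -> R,
  [/\ forall t u v, g (t%:C *: u + v) = t * g u + g v,
      forall u, g u <= p u & g x = p x].
Proof.
have [A [PA Amax]] := @Zorn_bigcup _ (fun G => good (G `|` G0))
  (fun F FP tot => good_chain FP tot).
set H := A `|` G0.
have gH : good H := PA.
have G0H : G0 `<=` H by move=> z; right.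
have tot y : exists r, H (y, r).
  apply: contrapT => hny; have [c gc] := good_ext gH G0H hny.
  set H' := [set z | _] in gc.
  have HH' : H `<=` H'.
    by move=> [u r] Hu; exists u, r, 0; split => //; rewrite rmorph0 scale0r addr0 mul0r addr0.
  apply: (Amax H').
    split; first by move=> z Az; apply: HH'; left.
    move=> H'A; apply: hny; exists c; left; apply: H'A.
    exists 0, 0, 1; split.
      by apply: G0H; exists 0; rewrite rmorph0 scale0r mul0r.
    by rewrite rmorph1 scale1r add0r mul1r add0r.
  by rewrite setUidl //; apply: subset_trans HH'.
have [gf gc gd] := gH.
pose g u := projT1 (cid (tot u)).
have Hg u : H (u, g u) := projT2 (cid (tot u)).
exists g; split.
- by move=> t u v; apply: gf (Hg _) (gc _ _ _ _ t (Hg u) (Hg v)).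
- by move=> u; exact: gd (Hg u).
- apply: gf (Hg x) _; apply: G0H; exists 1; by rewrite rmorph1 scale1r mul1r.
Qed.

End RealHB.

Section ComplexHB.
Variables (R : realType) (V : normedModType R[i]) (M : set V).
Hypothesis M0 : M 0.
Hypothesis Mlin : forall c u v, M u -> M v -> M (c *: u + v).

Lemma ge0_real (z : R[i]) : 0 <= z -> z = (complex.Re z)%:C.
Proof. by case: z => a b /ger0_Im /= ->. Qed.

Definition nr (v : V) : R := complex.Re `|v|.

Lemma nrE v : `|v| = (nr v)%:C.
Proof. by rewrite /nr; move: (normr_ge0 v); case: `|v| => a b /ger0_Im /= ->. Qed.

Lemma normKE (c : R[i]) : `|c| = (complex.Re `|c|)%:C.
Proof. by move: (normr_ge0 c); case: `|c| => a b /ger0_Im /= ->. Qed.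

Lemma nr_ge0 v : 0 <= nr v.
Proof. by rewrite -ler0c -nrE. Qed.

Lemma nrD u v : nr (u + v) <= nr u + nr v.
Proof. have h := ler_normD u v; rewrite !nrE -rmorphD lecR in h; exact: h. Qed.

Lemma nrZ c v : nr (c *: v) = complex.Re `|c| * nr v.
Proof. have h := normrZ c v; rewrite !nrE (normKE c) -rmorphM in h; exact: complexI h. Qed.

Definition dist (a : V) : R := inf [set nr (a - m) | m in M].

Lemma dist_lb a : has_lbound [set nr (a - m) | m in M].
Proof. by exists 0 => _ [m _ <-]; exact: nr_ge0. Qed.

Lemma dist_ne a : [set nr (a - m) | m in M] !=set0.
Proof. by exists (nr (a - 0)), 0. Qed.

Lemma dist_le a m : M m -> dist a <= nr (a - m).
Proof. by move=> Mm; apply: ge_inf; [exact: dist_lb|exists m]. Qed.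

Lemma dist_ge0 a : 0 <= dist a.
Proof. by apply: lb_le_inf; [exact: dist_ne|move=> _ [m _ <-]; exact: nr_ge0]. Qed.

Lemma MD u v : M u -> M v -> M (u + v).
Proof. by move=> Mu Mv; have := Mlin 1 Mu Mv; rewrite scale1r. Qed.

Lemma MZ c u : M u -> M (c *: u).
Proof. by move=> Mu; have := Mlin c Mu M0; rewrite addr0. Qed.

Lemma dist_add a b : dist (a + b) <= dist a + dist b.
Proof.
rewrite -lerBlDr; apply: lb_le_inf; first exact: dist_ne.
move=> _ [m1 M1 <-]; rewrite lerBlDr -lerBlDl.
apply: lb_le_inf; first exact: dist_ne.
move=> _ [m2 M2 <-]; rewrite lerBlDl.
apply: le_trans (dist_le (a + b) (MD M1 M2)) _.
have -> : a + b - (m1 + m2) = (a - m1) + (b - m2) by rewrite opprD addrACA.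
exact: nrD.
Qed.

Lemma dist_scale_le c a : dist (c *: a) <= complex.Re `|c| * dist a.
Proof.
have [->|c0] := eqVneq c 0.
  rewrite scale0r normr0 /= mul0r; have := dist_le 0 M0.
  by rewrite subr0 /nr normr0.
have cp : 0 < complex.Re `|c| by rewrite -ltcR -normKE normr_gt0.
rewrite mulrC -ler_pdivrMr //; apply: lb_le_inf; first exact: dist_ne.
move=> _ [m Mm <-]; rewrite ler_pdivrMr //.
apply: le_trans (dist_le (c *: a) (MZ c Mm)) _.
by rewrite -scalerBr nrZ mulrC.
Qed.

Lemma dist_scale (t : R) a : 0 <= t -> dist (t%:C *: a) = t * dist a.
Proof.
have nt : complex.Re `|t%:C| = `|t|.
  by rewrite normc_def /= expr0n /= addr0 sqrtr_sqr.
move=> t0; apply/eqP; rewrite eq_le; apply/andP; split.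
  by have := dist_scale_le t%:C a; rewrite nt ger0_norm.
have [->|tp] := eqVneq t 0.
  by rewrite mul0r dist_ge0.
have tp' : 0 < t by rewrite lt_def tp t0.
rewrite -ler_pdivlMl //.
have := dist_scale_le (t^-1)%:C (t%:C *: a).
rewrite scalerA -rmorphM mulVf // rmorph1 scale1r.
have -> : complex.Re `|(t^-1)%:C| = t^-1.
  by rewrite normc_def /= expr0n /= addr0 sqrtr_sqr ger0_norm // invr_ge0.
by [].
Qed.


Lemma dist_pos x : ~ closure M x -> 0 < dist x.
Proof.
move=> nc; rewrite lt_def dist_ge0 andbT; apply/eqP => d0.
apply: nc => B /nbhs_ballP [e /= e0 sB].
have er : e = (complex.Re e)%:C by apply: ge0_real; exact: ltW.
have ep : 0 < complex.Re e by rewrite -ltcR -er.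
have hl : inf [set nr (x - m) | m in M] < complex.Re e by rewrite -/(dist x) d0.
have [_ [m Mm <-] hz] := inf_lt (dist_ne x) hl.
exists m; split => //; apply: sB.
by rewrite -ball_normE /= nrE er ltcR.
Qed.

Theorem sep_functional x : ~ closure M x -> exists f : V -> R[i],
  [/\ linear_fun f, forall a, `|f a| <= `|a|, forall m, M m -> f m = 0 & f x != 0].
Proof.
move=> nc.
have [g [gl gp gx]] := real_HB dist_ge0 dist_add dist_scale x.
have g0 : g 0 = 0.
  by have := gl 1 0 0; rewrite scale1r addr0 mul1r => /eqP; rewrite addrC -subr_eq subrr eq_sym => /eqP.
have gD u v : g (u + v) = g u + g v by have := gl 1 u v; rewrite rmorph1 scale1r mul1r.
have gZ t u : g (t%:C *: u) = t * g u by have := gl t u 0; rewrite !addr0 g0 addr0.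
have dec (z : R[i]) (a : V) : z *: a = (complex.Re z)%:C *: a + (complex.Im z)%:C *: ('i%C *: a).
  by rewrite scalerA -scalerDl; congr (_ *: _); case: z => zr zi /=; simpc.
have gz (z : R[i]) (a : V) : g (z *: a) = complex.Re z * g a + complex.Im z * g ('i%C *: a).
  by rewrite dec gD !gZ.
pose f (a : V) : R[i] := g a +i* - g ('i%C *: a).
have fl : linear_fun f.
  move=> c a b; rewrite /f scalerDr scalerA !gD (gz c a) (gz ('i%C * c) a).
  case: c => cr ci /=; simpc; apply/eqP; rewrite eq_complex /=; apply/andP; split; apply/eqP; ring.
have fb a : `|f a| <= (dist a)%:C.
  set s := Num.sqrt (g a ^+ 2 + g ('i%C *: a) ^+ 2).
  have nf : `|f a| = s%:C by rewrite normc_def /= sqrrN.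
  rewrite nf lecR.
  have [s0|s0] := eqVneq s 0; first by rewrite s0 dist_ge0.
  have ss : s ^+ 2 = g a ^+ 2 + g ('i%C *: a) ^+ 2.
    by rewrite sqr_sqrtr // addr_ge0 // sqr_ge0.
  pose l : R[i] := (g a / s) +i* (g ('i%C *: a) / s).
  have hl : g (l *: a) = s.
    rewrite gz /=.
    have -> : g a / s * g a + g ('i%C *: a) / s * g ('i%C *: a) = s ^+ 2 / s.
      by rewrite ss; field.
    by rewrite expr2 mulfK.
  have nl : complex.Re `|l| = 1.
    rewrite normc_def /= !expr_div_n -mulrDl -ss divff ?sqrtr1 //.
    by rewrite expf_neq0.
  have := gp (l *: a); rewrite hl => h; apply: le_trans h _.
  by have := dist_scale_le l a; rewrite nl mul1r.
have nx : f x != 0.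
  apply/eqP => fx0; have : complex.Re (f x) = 0 by rewrite fx0.
  by rewrite /= gx => dx0; have := dist_pos nc; rewrite dx0 ltxx.
exists f; split => //.
- move=> a; apply: le_trans (fb a) _.
  by have := dist_le a M0; rewrite subr0 -lecR -nrE.
- move=> m Mm; have d0 : dist m = 0.
    apply/le_anti; rewrite dist_ge0 andbT.
    by have := dist_le m Mm; rewrite subrr /nr normr0.
  by have := fb m; rewrite d0 normr_le0 => /eqP.
Qed.

End ComplexHB.


Section Bid.
Variables (R : realType) (A : normedModType R[i]).
Local Notation K := R[i].

Lemma fun_eval (c : K) (f g : A -> K) z : (c *: f + g) z = c * f z + g z.
Proof. by []. Qed.

Lemma ffun_eval (c : K) (f g : (A -> K) -> K) z : (c *: f + g) z = c * f z + g z.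
Proof. by []. Qed.

Lemma in_dual0 : in_dual (0 : A -> K).
Proof.
split; first by move=> c x y; rewrite /= mulr0 addr0.
by exists 0 => a; rewrite normr0 mul0r.
Qed.

Lemma dual_bound_norm (f : A -> K) N : dual_bound f N -> dual_bound f `|N|.
Proof.
move=> h a; have h1 := h a.
have h0 : 0 <= N * `|a| := le_trans (normr_ge0 _) h1.
apply: le_trans h1 _.
by rewrite -[X in X <= _]ger0_norm // normrM (ger0_norm (normr_ge0 a)).
Qed.

Lemma in_dual_lin (c : K) (f g : A -> K) : in_dual f -> in_dual g -> in_dual (c *: f + g).
Proof.
move=> [lf [N1 b1]] [lg [N2 b2]]; split.
  move=> d x y; rewrite !fun_eval lf lg; ring.
exists (`|c| * `|N1| + `|N2|) => a; rewrite fun_eval.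
apply: le_trans (ler_normD _ _) _; rewrite normrM mulrDl -mulrA.
apply: lerD; first by apply: ler_wpM2l => //; exact: dual_bound_norm.
exact: dual_bound_norm.
Qed.

Definition ev (a : A) : (A -> K) -> K := fun f => if `[< in_dual f >] then f a else 0.

Lemma evE a (f : A -> K) : in_dual f -> ev a f = f a.
Proof. by move=> h; rewrite /ev asboolT. Qed.

Lemma in_bidual_ev a : in_bidual (ev a).
Proof.
split.
- by move=> c f g hf hg; rewrite !evE //; exact: in_dual_lin.
- exists `|a| => f N hf N0 hb; rewrite evE // mulrC; exact: hb.
- by move=> f hf; rewrite /ev asboolF.
Qed.

Lemma bid0 (F : (A -> K) -> K) : in_bidual F -> F 0 = 0.
Proof.
move=> [hl _ _]; have := hl 1 0 0 in_dual0 in_dual0.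
rewrite scale1r addr0 mul1r => H.
by have := congr1 (fun z => z - F 0) H; rewrite addrK subrr.
Qed.

Lemma bidZ (F : (A -> K) -> K) c (f : A -> K) : in_bidual F -> in_dual f -> F (c *: f) = c * F f.
Proof.
move=> hF hf; have := (let: And3 hl _ _ := hF in hl) c f 0 hf in_dual0.
by rewrite !addr0 bid0 // addr0.
Qed.

Lemma bidD (F : (A -> K) -> K) (f g : A -> K) : in_bidual F -> in_dual f -> in_dual g -> F (f + g) = F f + F g.
Proof.
move=> hF hf hg; have := (let: And3 hl _ _ := hF in hl) 1 f g hf hg.
by rewrite scale1r mul1r.
Qed.

Lemma in_dualZ (c : K) (f : A -> K) : in_dual f -> in_dual (c *: f).
Proof. by move=> hf; have := in_dual_lin c hf in_dual0; rewrite addr0. Qed.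

Lemma in_dualD (f g : A -> K) : in_dual f -> in_dual g -> in_dual (f + g).
Proof. by move=> hf hg; have := in_dual_lin 1 hf hg; rewrite scale1r. Qed.

Lemma arensE (mA : A -> A -> A) (F G : (A -> K) -> K) (f : A -> K) : in_dual f ->
  arens1 mA F G f = F (fun a => G (fun b => f (mA a b))).
Proof. by move=> h; rewrite /arens1 asboolT. Qed.

End Bid.


Section Part2.
Variables (R : realType) (A : completeNormedModType R[i]) (mA : A -> A -> A).
Local Notation K := R[i].
Hypothesis hsw : bidual_swa mA.

Lemma part2 (phi d : A -> K) (Np Nd : K) :
  linear_fun phi -> 0 <= Np -> dual_bound phi Np ->
  (forall a b, phi (mA a b) = phi a * phi b) -> (exists a, phi a != 0) ->
  linear_fun d -> 0 <= Nd -> dual_bound d Nd ->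
  (forall a b, d (mA a b) = d a * phi b + phi a * d b) ->
  forall a, d a = 0.
Proof.
move=> lp Np0 bp mp [a1 pa1] ld Nd0 bd dd.
have hp : in_dual phi by split => //; exists Np.
have hd : in_dual d by split => //; exists Nd.
have [b0 pb0] : exists b0, phi b0 = 1.
  by exists ((phi a1)^-1 *: a1); rewrite linZ // mulVf.
have pZ s : phi (s *: b0) = s by rewrite linZ // pb0 mulr1.
pose T := Np ^+ 2 * `|b0|.
have T0 : 0 <= T by rewrite mulr_ge0 // exprn_ge0.
pose k := (T + 1)^-1.
have k0 : 0 < k by rewrite invr_gt0 ltr_wpDl.
have kT : k * T <= 1 by rewrite mulrC ler_pdivrMr ?mul1r ?lerDl // ltr_wpDl.
have kn0 : k != 0 by rewrite gt_eqF.
pose mB (x y : A) : A := (k * phi x * phi y) *: b0.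
have hmB : banach_mul mB.
  split.
  - by move=> c x y z; rewrite /mB lp scalerA -scalerDl; congr (_ *: _); ring.
  - by move=> c x y z; rewrite /mB lp scalerA -scalerDl; congr (_ *: _); ring.
  - by move=> x y z; rewrite /mB !pZ; congr (_ *: _); ring.
  - move=> x y; rewrite /mB normrZ !normrM (gtr0_norm k0).
    have hx := dual_bound_norm bp x; have hy := dual_bound_norm bp y.
    rewrite (ger0_norm Np0) in hx hy.
    apply: le_trans (_ : k * (Np * `|x|) * (Np * `|y|) * `|b0| <= _).
      apply: ler_wpM2r => //; apply: ler_pM.
      + by rewrite mulr_ge0 // ltW.
      + by [].
      + by apply: ler_wpM2l => //; exact: ltW.
      + exact: hy.
    have -> : k * (Np * `|x|) * (Np * `|y|) * `|b0| = (k * T) * (`|x| * `|y|).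
      by rewrite /T; ring.
    by apply: ler_piMl => //; rewrite mulr_ge0.
pose phiB (F : (A -> K) -> K) : A := (k^-1 * F phi) *: b0.
pose dB (F : (A -> K) -> K) (b : A) : K := F d * phi b.
have h1 : forall c x y, in_bidual x -> in_bidual y -> phiB (c *: x + y) = c *: phiB x + phiB y.
  by move=> c x y _ _; rewrite /phiB ffun_eval scalerA -scalerDl; congr (_ *: _); ring.
have h2 : forall x y, in_bidual x -> in_bidual y -> phiB (arens1 mA x y) = mB (phiB x) (phiB y).
  move=> F G hF hG; rewrite /phiB arensE //.
  have e1 : (fun a => G (fun b => phi (mA a b))) = G phi *: phi.
    apply: funext => a.
    have -> : (fun b => phi (mA a b)) = phi a *: phi by apply: funext => b; rewrite mp.
    by rewrite bidZ // mulrC.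
  rewrite e1 bidZ // /mB !pZ; congr (_ *: _); field; exact: kn0.
have h3 : exists C, forall x M, in_bidual x -> bidual_bound x M -> `|phiB x| <= C * M.
  exists (`|k^-1| * Np * `|b0|) => F M hF hM; have h := hM phi Np hp Np0 bp.
  rewrite /phiB normrZ normrM.
  apply: le_trans (_ : `|k^-1| * (M * Np) * `|b0| <= _).
    by apply: ler_wpM2r => //; apply: ler_wpM2l.
  by rewrite le_eqVlt; apply/orP; left; apply/eqP; ring.
have h4 : forall c x y b, in_bidual x -> in_bidual y -> dB (c *: x + y) b = c * dB x b + dB y b.
  by move=> c x y b _ _; rewrite /dB ffun_eval; ring.
have h5 : forall x c b b', in_bidual x -> dB x (c *: b + b') = c * dB x b + dB x b'.
  by move=> x c b b' _; rewrite /dB lp; ring.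
have h6 : exists C, forall x M b, in_bidual x -> bidual_bound x M -> `|dB x b| <= C * M * `|b|.
  exists (Nd * Np) => F M b hF hM; rewrite /dB normrM.
  have h := hM d Nd hd Nd0 bd.
  have hb := dual_bound_norm bp b; rewrite (ger0_norm Np0) in hb.
  apply: le_trans (_ : (M * Nd) * (Np * `|b|) <= _).
    by apply: ler_pM.
  by rewrite le_eqVlt; apply/orP; left; apply/eqP; ring.
have h7 : forall x y b, in_bidual x -> in_bidual y ->
    dB (arens1 mA x y) b = dB x (mB (phiB y) b) + dB y (mB b (phiB x)).
  move=> F G b hF hG; rewrite /dB arensE //.
  have e1 : (fun a => G (fun b1 => d (mA a b1))) = G phi *: d + G d *: phi.
    apply: funext => a.
    have -> : (fun b1 => d (mA a b1)) = d a *: phi + phi a *: d by apply: funext => b1; rewrite dd.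
    rewrite (bidD hG (in_dualZ _ hp) (in_dualZ _ hd)) (bidZ _ hG hp) (bidZ _ hG hd).
    have -> : (G phi *: d + G d *: phi) a = G phi * d a + G d * phi a by [].
    ring.
  rewrite e1 (bidD hF (in_dualZ _ hd) (in_dualZ _ hp)) (bidZ _ hF hp) (bidZ _ hF hd).
  rewrite /mB /phiB !pZ; field; exact: kn0.
have key a : d a * (k^-1 * phi b0) + d b0 * (k^-1 * phi a) = 0.
  have := hsw hmB h1 h2 h3 h4 h5 h6 h7 (in_bidual_ev a) (in_bidual_ev b0).
  by rewrite /dB /phiB !evE // !pZ.
have db0 : d b0 = 0.
  have := key b0; rewrite pb0 mulr1 -mulr2n => /eqP.
  rewrite mulrn_eq0 /= mulf_eq0 invr_eq0 (negbTE kn0) orbF => /eqP //.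
move=> a; have := key a; rewrite db0 mul0r addr0 pb0 mulr1 => /eqP.
by rewrite mulf_eq0 invr_eq0 (negbTE kn0) orbF => /eqP.
Qed.
End Part2.


Section Part1.
Variables (R : realType) (A : completeNormedModType R[i]) (mA : A -> A -> A).
Local Notation K := R[i].
Hypothesis hsw : bidual_swa mA.

Lemma span0 : span_products mA 0.
Proof. by exists 0%N, (fun _ => 0), (fun _ => 0), (fun _ => 0); rewrite big_ord0. Qed.

Lemma span_lin c u v : span_products mA u -> span_products mA v ->
  span_products mA (c *: u + v).
Proof.
move=> [n [c1 [a1 [b1 ->]]]] [m [c2 [a2 [b2 ->]]]].
have sL (i : 'I_n) : fintype.split (lshift m i) = inl i := unsplitK (inl _ i).
have sR (i : 'I_m) : fintype.split (rshift n i) = inr i := unsplitK (inr _ i).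
exists (n + m)%N, (fun i => match fintype.split i with inl j => c * c1 j | inr j => c2 j end),
  (fun i => match fintype.split i with inl j => a1 j | inr j => a2 j end),
  (fun i => match fintype.split i with inl j => b1 j | inr j => b2 j end).
rewrite big_split_ord /= scaler_sumr; congr (_ + _); apply: eq_bigr => i _.
  by rewrite sL scalerA.
by rewrite sR.
Qed.

Lemma span_prod a b : span_products mA (mA a b).
Proof.
exists 1%N, (fun _ => 1), (fun _ => a), (fun _ => b).
by rewrite big_ord1 scale1r.
Qed.

Lemma part1 : closure (span_products mA) = setT.
Proof.
apply/seteqP; split => // x _; apply: contrapT => nc.
have [f [lf bf f0 fx]] := sep_functional span0 span_lin nc.
have bf1 : dual_bound f 1 by move=> a; rewrite mul1r.
have hf : in_dual f by split => //; exists 1.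
pose mB (y z : A) : A := 0.
have hmB : banach_mul mB.
  split => //.
  - by move=> *; rewrite /mB scaler0 addr0.
  - by move=> *; rewrite /mB scaler0 addr0.
  - by move=> y z; rewrite /mB normr0 mulr_ge0.
pose phiB (F : (A -> K) -> K) : A := F f *: x.
pose dB (F : (A -> K) -> K) (b : A) : K := F f * f b.
have h1 : forall c y z, in_bidual y -> in_bidual z -> phiB (c *: y + z) = c *: phiB y + phiB z.
  by move=> c y z _ _; rewrite /phiB ffun_eval scalerDl scalerA.
have hz F G : in_bidual F -> in_bidual G -> arens1 mA F G f = 0.
  move=> hF hG; rewrite arensE //.
  have -> : (fun a => G (fun b => f (mA a b))) = 0.
    apply: funext => a.
    have -> : (fun b => f (mA a b)) = 0 by apply: funext => b; rewrite f0 //; exact: span_prod.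
    exact: bid0.
  exact: bid0.
have h2 : forall y z, in_bidual y -> in_bidual z -> phiB (arens1 mA y z) = mB (phiB y) (phiB z).
  by move=> F G hF hG; rewrite /phiB hz // scale0r.
have h3 : exists C, forall y M, in_bidual y -> bidual_bound y M -> `|phiB y| <= C * M.
  exists `|x| => F M hF hM; have h := hM f 1 hf ler01 bf1.
  rewrite /phiB normrZ mulr1 in h *; rewrite mulrC; exact: ler_wpM2l.
have h4 : forall c y z b, in_bidual y -> in_bidual z -> dB (c *: y + z) b = c * dB y b + dB z b.
  by move=> c y z b _ _; rewrite /dB ffun_eval; ring.
have h5 : forall y c b b', in_bidual y -> dB y (c *: b + b') = c * dB y b + dB y b'.
  by move=> y c b b' _; rewrite /dB lf; ring.
have h6 : exists C, forall y M b, in_bidual y -> bidual_bound y M -> `|dB y b| <= C * M * `|b|.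
  exists 1 => F M b hF hM; have h := hM f 1 hf ler01 bf1.
  rewrite mulr1 in h; rewrite /dB normrM mul1r; apply: ler_pM => //.
have h7 : forall y z b, in_bidual y -> in_bidual z ->
    dB (arens1 mA y z) b = dB y (mB (phiB z) b) + dB z (mB b (phiB y)).
  by move=> F G b hF hG; rewrite /dB /mB hz // lin0 // !mulr0 mul0r addr0.
have := hsw hmB h1 h2 h3 h4 h5 h6 h7 (in_bidual_ev x) (in_bidual_ev x).
rewrite /dB /phiB !evE // !(linZ _ _ lf) -mulr2n => /eqP.
rewrite mulrn_eq0 /= !mulf_eq0 (negbTE fx) /=.
done.
Qed.
End Part1.

Close Scope complex_scope.
Unset Implicit Arguments.

Theorem theorem4p2 (R : realType) (A : completeNormedModType R[i])
    (mA : A -> A -> A) :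
  banach_mul mA ->
  bidual_swa mA ->
  closure (span_products mA) = setT /\
  (forall phi : A -> R[i]^o,
     linear_fun phi -> continuous phi ->
     (forall a b, phi (mA a b) = phi a * phi b) ->
     (exists a, phi a != 0) ->
   forall d : A -> R[i]^o,
     linear_fun d -> continuous d ->
     (forall a b, d (mA a b) = d a * phi b + phi a * d b) ->
   forall a, d a = 0).
Proof.
move=> hmA hsw; split; first exact: part1 hsw.
move=> phi lphi cphi mphi [a pa] d ld cd dd.
have [Np [Np0 bp]] := cont_bound lphi cphi.
have [Nd [Nd0 bd]] := cont_bound ld cd.
exact: (part2 hsw lphi Np0 bp mphi (ex_intro _ a pa) ld Nd0 bd dd).
Qed.
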